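(* Let $M(n,h)=\frac{2n+2-2\lceil 2\sqrt{n+h}\,\rceil}{4}$ and, for $h\ge1$, $m(h)=\min\{n\ge1: M(n,h)\ge h\}$. Then for every $h\ge 1$, $M(m(h),h)=h$. Furthermore, if $0\le \alpha-(m(h)+h)<3$ for some number $\alpha$ of the form $N^2$ or $N(N+1)$ with $N$ a positive integer, then $m(h+1)=m(h)+3$; otherwise $m(h+1)=m(h)+2$.
   Context: Here $M$ and $m$ are purely numerical functions as defined in the claim. *)

(* Defs.v *)
From HB Require Import structures.
From mathcomp Require Import all_boot all_order all_algebra.
From mathcomp Require Import reals.
Set Implicit Arguments. Unset Strict Implicit. Unset Printing Implicit Defensive.
Import Order.TTheory GRing.Theory Num.Theory.
Local Open Scope ring_scope.

Definition Mfun (R : realType) (n h : nat) : R :=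
  (2 * n%:R + 2 - 2 * (Num.ceil (2 * Num.sqrt (((n + h)%N)%:R : R)))%:~R) / 4.

Definition is_m (R : realType) (h n : nat) : Prop :=
  (1 <= n)%N /\ h%:R <= Mfun R n h /\
  forall k : nat, (1 <= k)%N -> h%:R <= Mfun R k h -> (n <= k)%N.

Definition near_square_cond (x : nat) : Prop :=
  exists (alpha N : nat), (0 < N)%N /\ (alpha = N ^ 2 \/ alpha = N * N.+1)%N /\
    (x <= alpha)%N /\ (alpha < x + 3)%N.

(* Main.v *)
Require Import Defs.
From HB Require Import structures.
From mathcomp Require Import all_boot all_order all_algebra.
From mathcomp Require Import reals.
From mathcomp Require Import ring lra zify.
Import Order.TTheory GRing.Theory Num.Theory.
Local Open Scope ring_scope.


Lemma key (R : realType) (s : nat) (z : int) :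
  (Num.ceil (2 * Num.sqrt (s%:R : R)) <= z) = (0 <= z) && (4 * s%:Z <= z * z).
Proof.
rewrite ceil_le_int.
have q0 : 0 <= Num.sqrt (s%:R : R) by apply: sqrtr_ge0.
have q2 : Num.sqrt (s%:R : R) * Num.sqrt (s%:R : R) = s%:R.
  by rewrite -expr2 sqr_sqrtr // ler0n.
have E : ((4 * s%:Z <= z * z) = (4 * (s%:R : R) <= z%:~R * z%:~R)).
  by rewrite -(ler_int R) rmorphM /= rmorphM /= -[s%:R]/((s:int)%:~R).
rewrite E -(ler0z R).
apply/idP/idP.
  move=> H. apply/andP; split; nra.
move=> /andP [H1 H2]. nra.
Qed.
Definition Cnd (n h : nat) := ((2*h <= n+1) && (4*(n+h) <= (n+1-2*h)*(n+1-2*h)))%N.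

Lemma Mge (R : realType) n h : (h%:R <= Mfun R n h) = Cnd n h.
Proof.
have -> : (h%:R <= Mfun R n h) =
   (Num.ceil (2 * Num.sqrt (((n + h)%N)%:R : R)) <= n%:Z + 1 - 2*h%:Z).
  rewrite /Mfun ler_pdivlMr // -(ler_int R).
  rewrite !rmorphD /= !rmorphN /= !rmorphM /= !pmulrn.
  apply/idP/idP => H; lra.
rewrite key /Cnd.
have [le|lt] := leqP (2*h) (n+1).
  have -> : (n%:Z + 1 - 2*h%:Z) = (n+1-2*h)%N%:Z by lia.
  by rewrite -!PoszM lez_nat.
have : ~~ (0 <= n%:Z + 1 - 2*h%:Z) by rewrite -ltNge; lia.
by move/negbTE => ->.
Qed.


Lemma Meq (R : realType) n h :
  (2*h <= n+1)%N -> (4*(n+h) <= (n+1-2*h)*(n+1-2*h))%N ->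
  ((n-2*h)*(n-2*h) < 4*(n+h))%N -> (1 <= n+1-2*h)%N -> Mfun R n h = h%:R.
Proof.
move=> H1 H2 H3 H4.
have A := key R (n+h) (n%:Z + 1 - 2*h%:Z).
have B := key R (n+h) (n%:Z - 2*h%:Z).
have Hz : (n%:Z + 1 - 2*h%:Z) = (n+1-2*h)%N%:Z by lia.
have Hz' : (n%:Z - 2*h%:Z) = (n-2*h)%N%:Z by lia.
rewrite Hz -!PoszM lez_nat H2 andbT in A.
rewrite Hz' -!PoszM lez_nat leqNgt H3 andbF in B.
have Hc : Num.ceil (2 * Num.sqrt (((n + h)%N)%:R : R)) = n%:Z + 1 - 2*h%:Z.
  move: A B; set c := Num.ceil _ => A B. rewrite Hz. lia.
rewrite /Mfun Hc.
have -> : ((n%:Z + 1 - 2*h%:Z)%:~R : R) = n%:R + 1 - 2 * h%:R.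
  by rewrite !rmorphD /= rmorphN /= rmorphM.
apply: (@mulIf R 4); first by rewrite pnatr_eq0.
rewrite divfK; [lra | by rewrite pnatr_eq0].
Qed.

Lemma cndE h n : (1 <= h)%N ->
  Cnd n h = ((2*h+1 <= n) && (12*h <= (n-2*h-1)*(n-2*h-1)))%N.
Proof.
move=> hh; rewrite /Cnd.
case: (leqP (2*h+1) n) => le /=.
  have [j ->] : exists j, n = (2*h+1+j)%N by exists (n - (2*h+1))%N; lia.
  have -> : (2*h+1+j+1-2*h = j+2)%N by lia.
  have -> : (2*h+1+j-2*h-1 = j)%N by lia.
  have -> : (2 * h <= 2 * h + 1 + j + 1)%N by lia.
  apply/idP/idP => H; lia.
apply/negbTE/negP => /andP [H1 H2].
have : ((n + 1 - 2 * h) * (n + 1 - 2 * h) <= 1*1)%N by apply: leq_mul; lia.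
lia.
Qed.


Lemma is_mE (R : realType) h k : (1 <= h)%N -> (12*h <= k*k)%N ->
  (forall j, (12*h <= j*j)%N -> (k <= j)%N) -> is_m R h (2*h+1+k).
Proof.
move=> hh K1 K2; split; first lia.
split.
  rewrite Mge cndE //; apply/andP; split; first lia.
  by have -> : (2*h+1+k-2*h-1 = k)%N by lia.
move=> n _; rewrite Mge cndE // => /andP [H1 H2].
have := K2 _ H2; lia.
Qed.

Theorem lemma4 (R : realType) (h : nat) (hh : (1 <= h)%N) :
  exists mh : nat, is_m R h mh /\ Mfun R mh h = h%:R /\
    exists mh1 : nat, is_m R h.+1 mh1 /\
      (near_square_cond (mh + h) -> mh1 = (mh + 3)%N) /\
      (~ near_square_cond (mh + h) -> mh1 = (mh + 2)%N).
Proof.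
have ex : exists k, (12*h <= k*k)%N by exists (12*h)%N; nia.
case: (ex_minnP ex) => k K1 K2.
have K4 : (4 <= k)%N.
  case: (leqP 4 k) => // lt.
  have : (k*k <= 3*3)%N by apply: leq_mul; lia.
  lia.
have K3 : (k*k + 1 < 12*h + 2*k)%N.
  case: (leqP (12*h) ((k-1)*(k-1))) => H.
    have := K2 _ H; lia.
  have [j Ej] : exists j, k = j.+1 by exists k.-1; lia.
  move: H; rewrite Ej; have -> : (j.+1 - 1 = j)%N by lia. nia.
exists (2*h+1+k)%N; split; first exact: is_mE.
split.
  apply: Meq.
  - lia.
  - set z := (_ - _)%N; have -> : z = (k+2)%N by rewrite /z; lia.
    nia.
  - set z := (_ - _)%N; have -> : z = (k+1)%N by rewrite /z; lia.
    nia.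
  - lia.
have NS : near_square_cond (2*h+1+k+h) <-> (k*k < 12*h+12)%N.
  split.
    move=> [a [N [N0 [Ha [Ha1 Ha2]]]]].
    rewrite ltnNge; apply/negP => Hk.
    case: Ha => Ha; rewrite Ha in Ha1 Ha2.
      case: (leqP (2*N) (k+1)) => HN.
        have : ((2*N)*(2*N) <= (k+1)*(k+1))%N by apply: leq_mul; lia.
        lia.
      have : ((k+2)*(k+2) <= (2*N)*(2*N))%N by apply: leq_mul; lia.
      lia.
    case: (leqP (2*N+1) (k+1)) => HN.
      have : ((2*N+1)*(2*N+1) <= (k+1)*(k+1))%N by apply: leq_mul; lia.
      lia.
    have : ((k+2)*(k+2) <= (2*N+1)*(2*N+1))%N by apply: leq_mul; lia.
    lia.
  move=> Hk.
  have [N [EN|EN]] : exists N, k = (2*N)%N \/ k = (2*N+1)%N.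
    exists (k %/ 2)%N; lia.
    exists ((N+1)*(N+1))%N, (N+1)%N; split; first lia.
    split; first by left; rewrite expnS expn1.
    subst k; lia.
  exists ((N+1)*(N+2))%N, (N+1)%N; split; first lia.
  split; first by right; congr (_ * _); lia.
  subst k; lia.
case: (leqP (12*h+12) (k*k)) => Hk.
  exists (2*h.+1+1+k)%N; split.
    apply: is_mE => //; first lia.
    move=> j Hj; apply: K2; lia.
  split; last by lia.
  move=> /NS; lia.
exists (2*h.+1+1+(k+1))%N; split.
  apply: is_mE => //.
    case: (leqP 6 k) => H6; first nia.
    have [E|E] : k = 4%N \/ k = 5%N by lia.
      subst k; lia.
    subst k; lia.
  move=> j Hj; case: (leqP (k+1) j) => // Hjk.
  have : (j*j <= k*k)%N by apply: leq_mul; lia.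
  lia.
split; first lia.
move=> H; exfalso; apply: H; apply/NS; exact: Hk.
Qed.
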